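(* Let $m\ge 5$ and $H=\Theta(l_1,\ldots,l_m)$ with $l_1=2$ and $l_2=\cdots=l_m=4$, and let $G=H^2$. Then $G$ is equitably $(m+2)$-choosable.
   Context: $\Theta(l_1,\ldots,l_m)$ denotes the graph consisting of two vertices $u,w$ joined by $m$ internally disjoint paths of lengths $l_1,\ldots,l_m$. For a graph $H$, $H^2$ has vertex set $V(H)$ with two vertices adjacent iff their distance in $H$ is 1 or 2. A $k$-assignment $L$ assigns to each vertex a set of exactly $k$ colors; an equitable $L$-coloring of $G$ is a proper coloring $f$ with $f(v)\in L(v)$ such that no color is used more than $\lceil |V(G)|/k\rceil$ times; $G$ is equitably $k$-choosable if it has an equitable $L$-coloring for every $k$-assignment $L$. *)

(* Defs.v *)
From mathcomp Require Import all_boot.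
Set Implicit Arguments. Unset Strict Implicit. Unset Printing Implicit Defensive.

(* Vertices of Theta(l_0,...,l_{m-1}): the two ends u (= inl false) and
   w (= inl true), plus, for each path i, its l i - 1 internal vertices
   (i, j) with j : 'I_(l i).-1; internal vertex (i,j) is at distance j+1
   from u along path i. *)
Definition theta_V (m : nat) (l : 'I_m -> nat) : finType :=
  (bool + {i : 'I_m & 'I_(l i).-1})%type.

Definition theta_end_adj (m : nat) (l : 'I_m -> nat) (b : bool)
    (p : {i : 'I_m & 'I_(l i).-1}) : bool :=
  if b then (val (tagged p)).+2 == l (tag p) else val (tagged p) == 0.

Definition theta_adj (m : nat) (l : 'I_m -> nat) : rel (theta_V l) :=
  fun x y =>
    match x, y with
    | inl a, inl b => (a != b) && [exists i, l i == 1]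
    | inl a, inr q => @theta_end_adj m l a q
    | inr p, inl b => @theta_end_adj m l b p
    | inr p, inr q =>
        (tag p == tag q) &&
        (((val (tagged p)).+1 == val (tagged q)) ||
         ((val (tagged q)).+1 == val (tagged p)))
    end.

Definition graph_sq (T : finType) (e : rel T) : rel T :=
  fun x y => (x != y) && (e x y || [exists z, e x z && e z y]).

Definition ceil_div (n k : nat) : nat := (n + k.-1) %/ k.

(* equitable k-choosability; colours range over an arbitrary finite type
   (only finitely many colours occur in any list assignment) *)
Definition equitably_choosable (T : finType) (e : rel T) (k : nat) : Prop :=
  forall (C : finType) (L : T -> {set C}),
    (forall v, #|L v| = k) ->
    exists f : T -> C,
      (forall v, f v \in L v) /\
      (forall x y, e x y -> f x != f y) /\
      (forall c, #|[set v | f v == c]| <= ceil_div #|T| k).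

(* lengths l_1 = 2, l_2 = ... = l_m = 4 (0-indexed) *)
Definition theta_lens (m : nat) : 'I_m -> nat :=
  fun i => if val i == 0 then 2 else 4.

(* Main.v *)
Require Import Defs.
From mathcomp Require Import all_boot zify.
Set Implicit Arguments. Unset Strict Implicit. Unset Printing Implicit Defensive.

Definition TT (n : nat) : finType := theta_V (@theta_lens n.+4.+1).

Definition cls n (v : TT n) : nat :=
  match v with
  | inl b => if b then 1 else 0
  | inr p => if val (tag p) == 0 then 2 else (val (tagged p)).+3
  end.

Definition idx n (v : TT n) : nat :=
  match v with inl _ => 0 | inr p => val (tag p) end.

Lemma lens_bound m (i : 'I_m) k : k < (theta_lens i).-1 ->
  if val i == 0 then k = 0 else k < 3.
Proof. by rewrite /theta_lens; case: eqP => _ //; case: k. Qed.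

Lemma lens_ord m (i : 'I_m) (j : 'I_(theta_lens i).-1) :
  if val i == 0 then nat_of_ord j = 0 else nat_of_ord j < 3.
Proof. exact: lens_bound (ltn_ord j). Qed.

Lemma idx_lt n (v : TT n) : idx v < n.+4.+1.
Proof. by case: v => [b|[i j]] //=. Qed.

Lemma cls_le n (v : TT n) : cls v <= 5.
Proof.
case: v => [[]|[i j]] //=; have := lens_ord j; case: eqP => //.
Qed.

Lemma cls_small n (v : TT n) : cls v <= 2 -> idx v = 0.
Proof.
case: v => [b|[i j]] //=; have := lens_ord j; case: eqP => // _ _.
Qed.

Lemma cls_big n (v : TT n) : 3 <= cls v -> idx v != 0.
Proof.
case: v => [[]|[i j]] //=; case: eqP => //.
Qed.

Lemma key_inj n (v y : TT n) : cls v = cls y -> idx v = idx y -> v = y.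
Proof.
case: v => [a|[i j]]; case: y => [b|[i' j']] /=.
- by case: a; case: b.
- by case: a; case: eqP.
- by case: b; case: eqP.
- move=> ec /val_inj ei; subst i'.
  have hj := lens_ord j; have hj' := lens_ord j'.
  have : nat_of_ord j = nat_of_ord j'.
    move: ec hj hj'; case: eqP => _; first by move=> _ -> ->.
    by move=> [].
  by move/val_inj->.
Qed.

Definition RHk (c1 i1 c2 i2 : nat) : bool :=
  match c1, c2 with
  | 0, 2 | 0, 3 | 1, 2 | 1, 5 | 2, 0 | 2, 1 | 3, 0 | 5, 1 => true
  | 3, 4 | 4, 3 | 4, 5 | 5, 4 => i1 == i2
  | _, _ => false
  end.

Definition Gk (c1 i1 c2 i2 : nat) : bool :=
  (c1 == c2) ||
  match c1, c2 with
  | 0, 1 | 0, 2 | 0, 3 | 0, 4 => true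
  | 1, 0 | 1, 2 | 1, 4 | 1, 5 => true
  | 2, 0 | 2, 1 | 2, 3 | 2, 5 => true
  | 3, 0 | 3, 2 => true | 3, 4 | 3, 5 => i1 == i2
  | 4, 0 | 4, 1 => true | 4, 3 | 4, 5 => i1 == i2
  | 5, 1 | 5, 2 => true | 5, 3 | 5, 4 => i1 == i2
  | _, _ => false
  end.

Lemma RH_G c1 i1 c2 i2 : RHk c1 i1 c2 i2 -> Gk c1 i1 c2 i2.
Proof.
by move: c1 c2 => [|[|[|[|[|[|c1]]]]]] [|[|[|[|[|[|c2]]]]]] //=; rewrite orbC.
Qed.

Lemma RH_comp c1 i1 c3 i3 c2 i2 :
  RHk c1 i1 c3 i3 -> RHk c3 i3 c2 i2 -> Gk c1 i1 c2 i2.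
Proof.
move: c1 c3 c2 => [|[|[|[|[|[|c1]]]]]] [|[|[|[|[|[|c3]]]]]] [|[|[|[|[|[|c2]]]]]] //=;
  try by move=> /eqP-> /eqP->.
all: by move=> /eqP-> /eqP->; rewrite /Gk /= eqxx.
Qed.

Definition part (c : nat) : nat :=
  if c == 4 then 2 else if (c == 1) || (c == 5) then 1 else 0.

Lemma part_G c1 i1 c2 i2 : c1 <= 5 -> c2 <= 5 -> part c1 == part c2 -> Gk c1 i1 c2 i2.
Proof.
by move: c1 c2 => [|[|[|[|[|[|c1]]]]]] [|[|[|[|[|[|c2]]]]]].
Qed.

Notation Hadj n := (@theta_adj n.+4.+1 (@theta_lens n.+4.+1)).

Lemma H_RH n (v y : TT n) : Hadj n v y -> RHk (cls v) (idx v) (cls y) (idx y).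
Proof.
case: v => [a|[i j]]; case: y => [b|[i' j']] /=.
- case/andP=> _ /existsP [k]; rewrite /theta_lens; by case: ifP.
- rewrite /theta_end_adj /=; move: (nat_of_ord j') (lens_ord j') => k.
  rewrite /theta_lens.
  by case: a; case: eqP => //= _; case: k => [|[|[|?]]].
- rewrite /theta_end_adj /=; move: (nat_of_ord j) (lens_ord j) => k.
  rewrite /theta_lens.
  by case: b; case: eqP => //= _; case: k => [|[|[|?]]].
- case/andP=> /eqP /= ei; subst i'.
  have := lens_ord j; have := lens_ord j'.
  case: eqP => _ /=.
    by move=> -> ->.
  rewrite eqxx.
  by case: (nat_of_ord j) => [|[|[|?]]] //; case: (nat_of_ord j') => [|[|[|?]]].
Qed.

Lemma H_sym n (v y : TT n) : Hadj n v y -> Hadj n y v.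
Proof.
case: v => [a|p]; case: y => [b|q] //=.
  by rewrite eq_sym.
by rewrite eq_sym orbC.
Qed.

Definition Gsq n := graph_sq (Hadj n).

Definition ep n : rel (TT n) := fun x y =>
  (x != y) && (Gsq x y || (part (cls x) == part (cls y))).

Lemma Gsq_sym n (x y : TT n) : Gsq x y -> Gsq y x.
Proof.
rewrite /Gsq /graph_sq => /andP[xy h]; rewrite eq_sym xy /=.
case/orP: h => [/H_sym->//|/existsP[z /andP[h1 h2]]].
by apply/orP; right; apply/existsP; exists z; rewrite (H_sym h2) (H_sym h1).
Qed.

Lemma ep_sym n (x y : TT n) : ep x y -> ep y x.
Proof.
rewrite /ep eq_sym => /andP[-> /orP[/Gsq_sym->//|/eqP->]].
by rewrite eqxx orbT.
Qed.

Lemma ep_irr n (x : TT n) : ~~ ep x x.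
Proof. by rewrite /ep eqxx. Qed.

Lemma ep_G n (x y : TT n) : ep x y -> Gk (cls x) (idx x) (cls y) (idx y).
Proof.
case/andP=> _ /orP[|]; last by apply: part_G; apply: cls_le.
case/andP=> _ /orP[/H_RH|/existsP[z /andP[/H_RH h1 /H_RH h2]]].
  exact: RH_G.
exact: RH_comp h1 h2.
Qed.
Definition isP c i := (c == 2) || ((c == 4) && (i == 1)).
Definition blk c i := match c with 0 => 1 | 1 => 2 | 3 => if i == 1 then 5 else 3
  | 5 => if i == 1 then 6 else 4 | _ => 0 end.
Definition Um cv iv cy iy : bool :=
  let C01 c := (cy == c) && ~~ ((iy == 0) || (iy == 1)) in
  let C01i c := (cy == c) && ~~ ((iy == iv) || ((iy == 0) || (iy == 1))) in
  let S c i := (cy == c) && (iy == i) in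
  match cv with
  | 0 | 4 => C01 4
  | 1 => S 0 0 || C01 4
  | 3 => if iv == 1 then S 0 0 || C01 3 else [|| S 0 0, S 4 iv | C01i 3]
  | 5 => if iv == 1 then [|| S 1 0, S 3 1 | C01 5] else [|| S 1 0, S 3 iv, S 4 iv | C01i 5]
  | _ => false
  end.
Lemma arith cv iv cy iy : cv <= 5 -> cy <= 5 -> (cv <= 2 -> iv = 0) -> (cy <= 2 -> iy = 0) ->
  (3 <= cv -> iv != 0) -> (3 <= cy -> iy != 0) -> ~~ ((cy == cv) && (iy == iv)) ->
  ~~ isP cv iv -> ~~ isP cy iy -> Gk cv iv cy iy -> blk cy iy <= blk cv iv -> Um cv iv cy iy.
Proof.
case: (iv =P 1) => [->|hv1]; case: (iy =P 1) => [->|hy1];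
move: cv cy => [|[|[|[|[|[|cv]]]]]] [|[|[|[|[|[|cy]]]]]] //=;
rewrite /Gk /isP /blk /Um /= ?(introF eqP hv1) ?(introF eqP hy1) /=; try lia.

Qed.
Lemma cardU_le (T : finType) (A B : {set T}) : #|A :|: B| <= #|A| + #|B|.
Proof. exact: leq_card_setU. Qed.

Lemma cardD_ge (T : finType) (A B : {set T}) : #|A| - #|B| <= #|A :\: B|.
Proof. rewrite cardsD leq_sub2l // subset_leq_card //; exact: subsetIr. Qed.

Lemma greedy (T C : finType) (e : rel T) (L : T -> {set C}) (P : {set T})
  (f0 : T -> C) (blk : T -> nat) :
  (forall x y, e x y -> e y x) -> (forall x, ~~ e x x) ->
  (forall v, v \in P -> f0 v \in L v) ->
  (forall x y, x \in P -> y \in P -> e x y -> f0 x != f0 y) ->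
  (forall v, v \notin P ->
     #|[set y | (y \notin P) && e v y && (blk y <= blk v)]|
       < #|L v :\: [set f0 y | y in [set y in P | e v y]]|) ->
  exists f : T -> C, (forall v, f v \in L v) /\ (forall x y, e x y -> f x != f y).
Proof.
move=> esym eirr f0L f0P hb.
suff: forall k (S : {set T}), #|S| = k -> [disjoint S & P] ->
  exists f : T -> C, (forall v, v \in S :|: P -> f v \in L v) /\
    (forall x y, x \in S :|: P -> y \in S :|: P -> e x y -> f x != f y) /\
    (forall v, v \in P -> f v = f0 v).
  move=> /(_ _ (~: P) erefl).
  case.
    by rewrite -setI_eq0 setIC setICr.
  move=> f [fL [fp _]]; exists f; split=> [v|x y]; first by apply: fL; rewrite setUC setUCr inE.
  by apply: fp; rewrite setUC setUCr inE.
elim=> [|k IH] S hS dS.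
  have -> : S = set0 by apply/eqP; rewrite -cards_eq0 hS.
  exists f0; rewrite set0U; split; first exact: f0L.
  by split=> // x y xP yP; apply: f0P.
have [v0 v0S] : exists v, v \in S.
  by apply/set0Pn; rewrite -card_gt0 hS.
pose v := [arg max_(v > v0 in S) blk v].
have [vS vmax] : v \in S /\ forall y, y \in S -> blk y <= blk v.
  by rewrite /v; case: arg_maxnP.
have SnP : forall y, y \in S -> y \notin P.
  by move=> y yS; rewrite (disjointFr dS yS).
have vP := SnP v vS.
have hS' : #|S :\ v| = k.
  by move: hS; rewrite (cardsD1 v S) vS add1n => -[].
have dS' : [disjoint S :\ v & P].
  by move: dS; rewrite !disjoints_subset; apply: subset_trans; rewrite subsetDl.
have [f [fL [fp f0e]]] := IH (S :\ v) hS' dS'.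
set NS := [set y in S :\ v | e v y].
set B := [set f0 y | y in [set y in P | e v y]].
have hsub : NS \subset [set y | (y \notin P) && e v y && (blk y <= blk v)].
  apply/subsetP=> y; rewrite !inE => /andP[/andP[_ yS] evy].
  by rewrite evy vmax // andbT SnP.
have [c cL] : exists c, c \in (L v :\: B) :\: f @: NS.
  apply/set0Pn; rewrite -card_gt0.
  apply: leq_trans (cardD_ge _ _).
  rewrite subn_gt0; apply: leq_ltn_trans (hb v vP).
  by apply: leq_trans (leq_imset_card _ _) (subset_leq_card hsub).
move: cL; rewrite !inE => /andP[cNS /andP[cB cLv]].
have key : forall y, y \in S :|: P -> y != v -> e v y -> c != f y.
  move=> y yin yv evy.
  case: (boolP (y \in P)) => yP.
    apply: contraNN cB => /eqP ->; rewrite (f0e y yP).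
    by apply/imsetP; exists y => //; rewrite !inE yP evy.
  apply: contraNN cNS => /eqP ->; apply/imsetP; exists y => //.
  move: yin; rewrite !inE (negbTE yP) orbF => ->; by rewrite yv evy.
exists (fun y => if y == v then c else f y); split; last split.
- move=> y; case: eqP => [->//|/eqP yv] yin; apply: fL.
  by move: yin; rewrite !inE yv.
- move=> x y xin yin exy.
  case: (x =P v) => [xv|/eqP xv]; case: (y =P v) => [yv|/eqP yv].
  + by move: exy; rewrite xv yv (negbTE (eirr v)).
  + by apply: key => //; rewrite -xv.
  + by rewrite eq_sym; apply: key => //; rewrite -yv; apply: esym.
  + apply: fp => //.
      by move: xin; rewrite !inE xv.
    by move: yin; rewrite !inE yv.
- move=> y yP; case: eqP => [yv|_]; last exact: f0e.
  by move: vP; rewrite -yv yP.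
Qed.


Definition Sg n (c i : nat) : {set TT n} := [set y | (cls y == c) && (idx y == i)].
Definition Cx n (c : nat) (X : {set 'I_n.+4.+1}) : {set TT n} :=
  [set y | (cls y == c) && (inord (idx y) \notin X)].
Definition X01 n : {set 'I_n.+4.+1} := [set inord 0; inord 1].
Definition X01i n i : {set 'I_n.+4.+1} := inord i |: X01 n.
Arguments Sg : clear implicits. Arguments Cx : clear implicits.
Arguments X01 : clear implicits. Arguments X01i : clear implicits.

Lemma card_Sg n (c i : nat) : #|Sg n c i| <= 1.
Proof.
apply/card_le1_eqP => x y; rewrite !inE => /andP[/eqP hx /eqP ix] /andP[/eqP hy /eqP iy].
by apply: key_inj; rewrite ?hx ?hy ?ix ?iy.
Qed.

Lemma inord_eq n k a : k < n.+4.+1 -> a < n.+4.+1 ->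
  (inord k == inord a :> 'I_n.+4.+1) = (k == a).
Proof.
move=> hk ha; apply/eqP/eqP => [h|->//].
by rewrite -(inordK hk) h inordK.
Qed.

Lemma card_Cx n (c : nat) X : #|Cx n c X| <= n.+4.+1 - #|X|.
Proof.
rewrite -(card_in_imset (f := fun y : TT n => inord (idx y) : 'I_n.+4.+1)).
  have hc0 := cardsC X; rewrite card_ord in hc0.
  apply: (@leq_trans #|~: X|); last by apply: eq_leq; lia.
  apply: subset_leq_card; apply/subsetP => j /imsetP[y]; rewrite !inE.
  by case/andP=> _ h ->.
move=> x y; rewrite !inE => /andP[/eqP hx _] /andP[/eqP hy _] /eqP.
rewrite inord_eq ?idx_lt // => /eqP e; apply: key_inj => //; by rewrite hx hy.
Qed.

Lemma card_X01 n : #|X01 n| = 2.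
Proof. by rewrite cards2 inord_eq. Qed.

Lemma card_X01i n i : 2 <= i -> i < n.+4.+1 -> #|X01i n i| = 3.
Proof.
move=> h2 hi; rewrite cardsU1 card_X01 !inE !inord_eq //; case: i h2 hi => [|[|i]] //.
Qed.

Lemma mem_Sg n c i (y : TT n) : (y \in Sg n c i) = (cls y == c) && (idx y == i).
Proof. by rewrite inE. Qed.

Lemma mem_Cx01 n c (y : TT n) :
  (y \in Cx n c (X01 n)) = (cls y == c) && ~~ ((idx y == 0) || (idx y == 1)).
Proof. by rewrite !inE !inord_eq ?idx_lt. Qed.

Lemma mem_Cx01i n c i (y : TT n) : i < n.+4.+1 ->
  (y \in Cx n c (X01i n i)) =
  (cls y == c) && ~~ ((idx y == i) || ((idx y == 0) || (idx y == 1))).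
Proof. by move=> hi; rewrite !inE !inord_eq ?idx_lt. Qed.

Definition Ufor n (cv iv : nat) : {set TT n} :=
  match cv with
  | 0 | 4 => Cx n 4 (X01 n)
  | 1 => Sg n 0 0 :|: Cx n 4 (X01 n)
  | 3 => if iv == 1 then Sg n 0 0 :|: Cx n 3 (X01 n)
         else Sg n 0 0 :|: Sg n 4 iv :|: Cx n 3 (X01i n iv)
  | 5 => if iv == 1 then Sg n 1 0 :|: Sg n 3 1 :|: Cx n 5 (X01 n)
         else Sg n 1 0 :|: Sg n 3 iv :|: Sg n 4 iv :|: Cx n 5 (X01i n iv)
  | _ => set0
  end.
Arguments Ufor : clear implicits.

Lemma Um_mem n cv iv (y : TT n) : iv < n.+4.+1 ->
  Um cv iv (cls y) (idx y) -> y \in Ufor n cv iv.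
Proof.
move=> hiv; rewrite /Um /Ufor.
case: cv => [|[|[|[|[|[|cv]]]]]] //=; try case: (iv == 1);
  rewrite ?in_setU ?mem_Sg ?mem_Cx01 ?(mem_Cx01i _ _ hiv) -?orbA //.
Qed.

Lemma cardU3_le (T : finType) (A B D : {set T}) : #|A :|: B :|: D| <= #|A| + #|B| + #|D|.
Proof. apply: leq_trans (cardU_le _ _) _; by rewrite leq_add2r cardU_le. Qed.

Lemma cardU4_le (T : finType) (A B D E : {set T}) :
  #|A :|: B :|: D :|: E| <= #|A| + #|B| + #|D| + #|E|.
Proof. apply: leq_trans (cardU_le _ _) _; by rewrite leq_add2r cardU3_le. Qed.

Lemma card_Ufor n (cv iv : nat) : ~~ isP cv iv -> (3 <= cv -> iv != 0) -> iv < n.+4.+1 ->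
  #|Ufor n cv iv| <= (if cv == 5 then n.+4.+1 else n.+4).
Proof.
move=> hP hb hiv; have s := @card_Sg n; have cx := @card_Cx n.
have cx01 : forall c : nat, #|Cx n c (X01 n)| <= n.+3.
  by move=> c; apply: leq_trans (cx _ _) _; rewrite card_X01.
have cx01i : iv != 1 -> 3 <= cv -> forall c : nat, #|Cx n c (X01i n iv)| <= n.+2.
  move=> h1 h3 c; apply: leq_trans (cx _ _) _; rewrite card_X01i //.
  by move: (hb h3) h1; case: iv {hP hb hiv} => [|[|]].
rewrite /Ufor; case: cv hP hb cx01i => [|[|[|[|[|[|cv]]]]]] //= hP hb cx01i.
- by apply: leq_trans (cx01 _) _.
- apply: leq_trans (cardU_le _ _) _.
  by apply: leq_trans (leq_add (s 0 0) (cx01 4)) _; lia.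
- case: ifP => h1.
    apply: leq_trans (cardU_le _ _) _.
    by apply: leq_trans (leq_add (s 0 0) (cx01 3)) _; lia.
  apply: leq_trans (cardU3_le _ _ _) _.
  apply: leq_trans (leq_add (leq_add (s 0 0) (s 4 iv)) (cx01i (negbT h1) isT 3)) _.
  lia.
- by apply: leq_trans (cx01 _) _.
- case: ifP => h1.
    apply: leq_trans (cardU3_le _ _ _) _.
    by apply: leq_trans (leq_add (leq_add (s 1 0) (s 3 1)) (cx01 5)) _; lia.
  apply: leq_trans (cardU4_le _ _ _ _) _.
  apply: leq_trans (leq_add (leq_add (leq_add (s 1 0) (s 3 iv)) (s 4 iv))
     (cx01i (negbT h1) isT 5)) _.
  lia.
- by rewrite cards0.
Qed.

Lemma card_TT n : #|TT n| = 3 * n + 15.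
Proof.
rewrite /TT /theta_V card_sum card_bool card_tagged.
rewrite sumnE big_map big_enum /= big_ord_recl /=.
rewrite (eq_bigr (fun _ => 3)); last first.
  move=> i _; rewrite card_ord /theta_lens /=. by [].
rewrite sum_nat_const card_ord card_ord /=. lia.
Qed.

Definition o0 n : 'I_n.+4.+1 := @Ordinal n.+4.+1 0 isT.
Definition o1 n : 'I_n.+4.+1 := @Ordinal n.+4.+1 1 isT.
Definition xv n : TT n :=
  inr (@existT _ (fun i : 'I_n.+4.+1 => 'I_(theta_lens i).-1) (o0 n) (@Ordinal 1 0 isT)).
Definition b1v n : TT n :=
  inr (@existT _ (fun i : 'I_n.+4.+1 => 'I_(theta_lens i).-1) (o1 n) (@Ordinal 3 1 isT)).
Definition c1v n : TT n :=
  inr (@existT _ (fun i : 'I_n.+4.+1 => 'I_(theta_lens i).-1) (o1 n) (@Ordinal 3 2 isT)).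

Lemma uniq_x n (y : TT n) : cls y = 2 -> y = xv n.
Proof. by move=> h; apply: key_inj => //; rewrite cls_small // h. Qed.
Lemma uniq_b1 n (y : TT n) : cls y = 4 -> idx y = 1 -> y = b1v n.
Proof. by move=> h1 h2; apply: key_inj. Qed.
Lemma uniq_c1 n (y : TT n) : cls y = 5 -> idx y = 1 -> y = c1v n.
Proof. by move=> h1 h2; apply: key_inj. Qed.

Definition Pset n : {set TT n} := [set y | isP (cls y) (idx y)].
Definition blkv n (y : TT n) := blk (cls y) (idx y).
Arguments Pset : clear implicits.

Lemma Sv_sub n (v : TT n) : v \notin Pset n ->
  [set y | (y \notin Pset n) && ep v y && (blkv y <= blkv v)] \subset
  Ufor n (cls v) (idx v).
Proof.
move=> vP; apply/subsetP => y; rewrite !inE => /andP[/andP[yP evy] hb].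
apply: Um_mem; first exact: idx_lt.
have vy : v != y by case/andP: evy.
apply: arith => //; try exact: cls_le; try exact: cls_small; try exact: cls_big.
- apply/negP => /andP[/eqP h1 /eqP h2]; move/eqP: vy; apply.
  by apply: key_inj.
- by move: vP; rewrite inE.
- exact: ep_G.
Qed.

Lemma Pset_card n : #|Pset n| <= 2.
Proof.
apply: (@leq_trans #|Sg n 2 0 :|: Sg n 4 1|).
  apply: subset_leq_card; apply/subsetP => y; rewrite !inE /isP.
  case/orP=> [/eqP h|->]; last by rewrite orbT.
  by rewrite h cls_small ?h.
apply: leq_trans (cardU_le _ _) _.
exact: leq_add (card_Sg _ _ _) (card_Sg _ _ _).
Qed.

Lemma PN5_card n (v : TT n) : cls v = 5 -> idx v != 1 ->
  #|[set y in Pset n | ep v y]| <= 1.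
Proof.
move=> c5 i1; apply: leq_trans (card_Sg n 2 0); apply: subset_leq_card.
apply/subsetP => y; rewrite !inE /isP => /andP[/orP[/eqP h|/andP[/eqP h /eqP h']]] evy.
  by rewrite h cls_small ?h.
by move: (ep_G evy); rewrite c5 h h' /Gk /= (negbTE i1).
Qed.

Lemma cardD2 (C : finType) (A : {set C}) p q :
  (p == q) || (p \notin A) || (q \notin A) -> #|A| - 1 <= #|A :\: [set p; q]|.
Proof.
move=> h; rewrite cardsD leq_sub2l //.
apply/card_le1_eqP => x y; rewrite !inE.
move: h; case: (p =P q) => [->|_] /=.
  by rewrite !orbb => _ /andP[_ /eqP->] /andP[_ /eqP->].
case/orP=> /negbTE hA /andP[xA hx] /andP[yA hy].
  move: hx hy; case: (x =P p) => [xp|_]; first by move: xA; rewrite xp hA.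
  case: (y =P p) => [yp|_]; first by move: yA; rewrite yp hA.
  by move=> /= /eqP-> /eqP->.
move: hx hy; case: (x =P q) => [xp|_]; first by move: xA; rewrite xp hA.
case: (y =P q) => [yp|_]; first by move: yA; rewrite yp hA.
by rewrite !orbF => /eqP-> /eqP->.
Qed.

Lemma choose_pq n (C : finType) (L : TT n -> {set C}) :
  (forall v, #|L v| = n.+4.+1 + 2) ->
  exists p q, [/\ p \in L (xv n), q \in L (b1v n) &
     (p == q) || (p \notin L (c1v n)) || (q \notin L (c1v n))].
Proof.
move=> hL.
have ne : forall v, exists c, c \in L v.
  by move=> v; apply/set0Pn; rewrite -card_gt0 hL addn2.
case: (set0Pn (L (xv n) :&: L (b1v n))) => [[a]|h0].
  by rewrite inE => /andP[a1 a2]; exists a, a; rewrite eqxx.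
case: (set0Pn (L (b1v n) :\: L (c1v n))) => [[b]|h1].
  rewrite inE => /andP[bc bb]; have [a ha] := ne (xv n).
  by exists a, b; rewrite bc !orbT.
have hsub : L (b1v n) \subset L (c1v n).
  by apply/subsetP => c cb; apply/negPn/negP => cc; apply: h1;
     exists c; rewrite inE cc cb.
have heq : L (b1v n) = L (c1v n).
  by apply/eqP; rewrite eqEcard hsub /= !hL leqnn.
have [a ha] := ne (xv n); have [b hb] := ne (b1v n).
exists a, b; split=> //; rewrite -heq; apply/orP; left; apply/orP; right.
by apply/negP => ab; apply: h0; exists a; rewrite inE ha ab.
Qed.

Lemma partv_le n (v : TT n) : part (cls v) <= 2.
Proof. by rewrite /part; case: ifP => //; case: ifP. Qed.

Theorem lemma3p7 (m : nat) (hm : 5 <= m) :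
  equitably_choosable (graph_sq (@theta_adj m (@theta_lens m))) (m + 2).
Proof.
case: m hm => [|[|[|[|[|n]]]]] // _.
move=> C L hL.
have [p [q [pL qL pq]]] := choose_pq hL.
pose f0 := fun y : TT n => if cls y == 2 then p else q.
have [f [fL fp]] : exists f : TT n -> C,
    (forall v, f v \in L v) /\ (forall x y, ep x y -> f x != f y).
  apply: (@greedy (TT n) C (@ep n) L (Pset n) f0 (@blkv n)).
  - exact: ep_sym.
  - exact: ep_irr.
  - move=> v; rewrite inE /isP /f0; case: eqP => [/uniq_x->//|_].
    by case/andP=> /eqP h1 /eqP h2; rewrite (uniq_b1 h1 h2).
  - move=> x y; rewrite !inE /isP => xP yP exy.
    have xy : x != y by case/andP: exy.
    have G := ep_G exy.
    move: xP yP G xy => /orP[/eqP cx|/andP[/eqP cx /eqP ix]]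
                        /orP[/eqP cy|/andP[/eqP cy /eqP iy]]; rewrite cx cy /Gk //=.
    + by rewrite (uniq_x cx) (uniq_x cy) eqxx.
    + by rewrite (uniq_b1 cx ix) (uniq_b1 cy iy) eqxx.
  - move=> v vP.
    apply: leq_ltn_trans (subset_leq_card (Sv_sub vP)) _.
    have hU := card_Ufor (n := n) (cv := cls v) (iv := idx v).
    have hU' : #|Ufor n (cls v) (idx v)| <= (if cls v == 5 then n.+4.+1 else n.+4).
      apply: hU; [by move: vP; rewrite inE| exact: cls_big | exact: idx_lt].
    apply: leq_ltn_trans hU' _.
    set B := [set f0 y | y in [set y in Pset n | ep v y]].
    have gen : #|L v| - #|B| <= #|L v :\: B| := cardD_ge _ _.
    have hB : #|B| <= #|[set y in Pset n | ep v y]| := leq_imset_card _ _.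
    have hPN : #|[set y in Pset n | ep v y]| <= #|Pset n|.
      by apply: subset_leq_card; apply/subsetP => y; rewrite inE => /andP[].
    have hP := Pset_card n.
    rewrite hL in gen.
    case: eqP => c5; last first.
      apply: leq_trans gen; lia.
    case: (idx v =P 1) => i1.
      have vc : v = c1v n by apply: uniq_c1.
      have h := cardD2 pq; rewrite -vc in h.
      apply: (@leq_trans (#|L v| - 1)); first by rewrite hL; lia.
      apply: leq_trans h (subset_leq_card _).
      apply: setDS; apply/subsetP => c /imsetP[y _ ->]; rewrite /f0 !inE.
      by case: ifP => _; rewrite eqxx ?orbT.
    have := PN5_card c5 (introN eqP i1); lia.
exists f; split=> //; split.
  move=> x y exy; apply: fp; have xy : x != y by case/andP: exy.
  by rewrite /ep /Gsq xy exy.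
move=> c.
have h3 : #|[set v | f v == c]| <= 3.
  pose A k := [set v | (f v == c) && (part (cls v) == k)].
  have hA : forall k, #|A k| <= 1.
    move=> k; apply/card_le1_eqP => x y; rewrite !inE.
    move=> /andP[/eqP fx /eqP px] /andP[/eqP fy /eqP py].
    apply/eqP; apply/negPn/negP => xy.
    have : ep x y by rewrite /ep eq_sym xy px py eqxx orbT.
    by move/fp; rewrite fx fy eqxx.
  apply: (@leq_trans #|A 0 :|: A 1 :|: A 2|).
    apply: subset_leq_card; apply/subsetP => v; rewrite !inE => ->.
    by have := partv_le v; case: (part (cls v)) => [|[|[|]]].
  apply: leq_trans (cardU3_le _ _ _) _.
  by apply: leq_trans (leq_add (leq_add (hA 0) (hA 1)) (hA 2)) _.
apply: leq_trans h3 _.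
rewrite /ceil_div (card_TT n) leq_divRL //; lia.
Qed.
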